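(* Let $R$ be a skew field. For $a_1,a_2,a_3,a_4\in R^*$ put $A_i=a_ia_{i+1}a_{i+2}a_{i+3}$ (indices mod $4$) and assume $1+A_i\neq0$ for all $i$. Define $\mu(a_1,a_2,a_3,a_4)=(b_1,b_2,b_3,b_4)$ by $$b_1=(1+A_3^{-1})a_3,\quad b_2=(1+A_4)^{-1}a_4,\quad b_3=(1+A_1^{-1})a_1,\quad b_4=(1+A_2)^{-1}a_2.$$ Then the square of this two by two transformation is the identity, in the sense that $\mu(b_2,b_3,b_4,b_1)=(a_2,a_3,a_4,a_1)$.
   Context: The transformation $\mu$ describes the change of $\mathcal A$-coordinates $a_i$ on the four internal edges of a bipartite ribbon graph under a two by two move; the relabeling $(b_2,b_3,b_4,b_1)$ corresponds to the rotation of the picture identifying the new graph with the old one. *)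

(* Defs.v *)
From mathcomp Require Import all_boot all_algebra.
Set Implicit Arguments. Unset Strict Implicit. Unset Printing Implicit Defensive.
Import GRing.Theory.
Local Open Scope ring_scope.

Definition skew_field (R : unitRingType) : Prop :=
  forall x : R, x != 0 -> x \is a GRing.unit.

Definition Aprod (R : unitRingType) (a1 a2 a3 a4 : R) : R := a1 * a2 * a3 * a4.

Definition mu (R : unitRingType) (a : R * R * R * R) : R * R * R * R :=
  let: (a1, a2, a3, a4) := a in
  let A1 := Aprod a1 a2 a3 a4 in
  let A2 := Aprod a2 a3 a4 a1 in
  let A3 := Aprod a3 a4 a1 a2 in
  let A4 := Aprod a4 a1 a2 a3 in
  ((1 + A3^-1) * a3, (1 + A4)^-1 * a4, (1 + A1^-1) * a1, (1 + A2)^-1 * a2).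

(* Main.v *)
Require Import Defs.
From mathcomp Require Import all_boot all_algebra.
Import GRing.Theory.
Local Open Scope ring_scope.

Section H.
Variable R : unitRingType.
Implicit Types x y A : R.

Lemma L1 A : A \is a GRing.unit -> 1 + A \is a GRing.unit ->
  (1 + A^-1) * (1 + A)^-1 = A^-1.
Proof.
move=> uA u1A.
have -> : 1 + A^-1 = A^-1 * (1 + A) by rewrite mulrDr mulr1 mulVr // addrC.
by rewrite mulrK.
Qed.

Lemma L2 A : A \is a GRing.unit -> 1 + A \is a GRing.unit ->
  (1 + A)^-1 * (1 + A^-1) = A^-1.
Proof.
move=> uA u1A.
have -> : 1 + A^-1 = (1 + A) * A^-1 by rewrite mulrDl mul1r mulrV // addrC.
by rewrite mulKr //.
Qed.

Lemma shift1 x y : 1 + x * y \is a GRing.unit -> 1 + y * x \is a GRing.unit ->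
  x * (1 + y * x)^-1 = (1 + x * y)^-1 * x.
Proof.
move=> u1 u2.
have e : x * (1 + y * x) = (1 + x * y) * x by rewrite mulrDr mulrDl mulr1 mul1r mulrA.
rewrite -[RHS](mulrK u2) -[(1 + x * y)^-1 * x * _]mulrA e mulKr //.
Qed.

Lemma shift2 x y : x \is a GRing.unit -> y \is a GRing.unit ->
  x * (1 + (y * x)^-1) = (1 + (x * y)^-1) * x.
Proof.
move=> ux uy.
rewrite mulrDr mulrDl mulr1 mul1r !invrM // mulrA mulrV // mul1r.
by rewrite -mulrA mulVr // mulr1.
Qed.

Lemma invMl x y : x \is a GRing.unit -> y \is a GRing.unit ->
  (x * y)^-1 * x = y^-1.
Proof. by move=> ux uy; rewrite invrM // -mulrA mulVr // mulr1. Qed.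

Lemma invM4 x y z w : x \is a GRing.unit -> y \is a GRing.unit ->
  z \is a GRing.unit -> w \is a GRing.unit ->
  (x * y * z * w)^-1 * x * y = (z * w)^-1.
Proof.
move=> ux uy uz uw.
rewrite -[x * y * z * w]mulrA -mulrA invMl // unitrMl //.
Qed.

End H.

Theorem lemma4p3 (R : unitRingType) (hR : skew_field R) (a1 a2 a3 a4 : R) :
  a1 != 0 -> a2 != 0 -> a3 != 0 -> a4 != 0 ->
  1 + Aprod a1 a2 a3 a4 != 0 ->
  1 + Aprod a2 a3 a4 a1 != 0 ->
  1 + Aprod a3 a4 a1 a2 != 0 ->
  1 + Aprod a4 a1 a2 a3 != 0 ->
  let: (b1, b2, b3, b4) := mu (a1, a2, a3, a4) in
  mu (b2, b3, b4, b1) = (a2, a3, a4, a1).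
Proof.
move=> /hR u1 /hR u2 /hR u3 /hR u4 /hR v1 /hR v2 /hR v3 /hR v4.
rewrite /Aprod in v1 v2 v3 v4.
pose b1 := (1 + (a3 * a4 * a1 * a2)^-1) * a3.
pose b2 := (1 + a4 * a1 * a2 * a3)^-1 * a4.
pose b3 := (1 + (a1 * a2 * a3 * a4)^-1) * a1.
pose b4 := (1 + a2 * a3 * a4 * a1)^-1 * a2.
change (mu (b2, b3, b4, b1) = (a2, a3, a4, a1)).
have E1 : b1 = (1 + (a3 * a4 * a1 * a2)^-1) * a3 by [].
have E2 : b2 = (1 + a4 * a1 * a2 * a3)^-1 * a4 by [].
have E3 : b3 = (1 + (a1 * a2 * a3 * a4)^-1) * a1 by [].
have E4 : b4 = (1 + a2 * a3 * a4 * a1)^-1 * a2 by [].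
clearbody b1 b2 b3 b4.
have U : forall x y : R, x \is a GRing.unit -> y \is a GRing.unit -> x * y \is a GRing.unit.
  by move=> x y ux uy; rewrite unitrMl.
have w1 := U _ _ (U _ _ (U _ _ u1 u2) u3) u4.
have w2 := U _ _ (U _ _ (U _ _ u2 u3) u4) u1.
have w3 := U _ _ (U _ _ (U _ _ u3 u4) u1) u2.
have w4 := U _ _ (U _ _ (U _ _ u4 u1) u2) u3.
have P12 : b1 * b2 = (a1 * a2)^-1.
  rewrite E1 E2 -mulrA [a3 * (_ * a4)]mulrA.
  have -> : a3 * (1 + a4 * a1 * a2 * a3)^-1 = (1 + a3 * a4 * a1 * a2)^-1 * a3.
    by rewrite (@shift1 R a3 (a4 * a1 * a2)); rewrite ?mulrA // ?U.
  by rewrite !mulrA L1 // invM4.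
have P34 : b3 * b4 = (a3 * a4)^-1.
  rewrite E3 E4 -mulrA [a1 * (_ * a2)]mulrA.
  have -> : a1 * (1 + a2 * a3 * a4 * a1)^-1 = (1 + a1 * a2 * a3 * a4)^-1 * a1.
    by rewrite (@shift1 R a1 (a2 * a3 * a4)); rewrite ?mulrA // ?U.
  by rewrite !mulrA L1 // invM4.
have P23 : b2 * b3 = (a2 * a3)^-1.
  rewrite E2 E3 -mulrA [a4 * (_ * a1)]mulrA.
  have -> : a4 * (1 + (a1 * a2 * a3 * a4)^-1) = (1 + (a4 * a1 * a2 * a3)^-1) * a4.
    by rewrite (@shift2 R a4 (a1 * a2 * a3)); rewrite ?mulrA // ?U.
  by rewrite !mulrA L2 // invM4.
have P41 : b4 * b1 = (a4 * a1)^-1.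
  rewrite E4 E1 -mulrA [a2 * (_ * a3)]mulrA.
  have -> : a2 * (1 + (a3 * a4 * a1 * a2)^-1) = (1 + (a2 * a3 * a4 * a1)^-1) * a2.
    by rewrite (@shift2 R a2 (a3 * a4 * a1)); rewrite ?mulrA // ?U.
  by rewrite !mulrA L2 // invM4.
rewrite /mu /Aprod.
have C1 : b2 * b3 * b4 * b1 = (a4 * a1 * a2 * a3)^-1.
  by rewrite -mulrA P23 P41 -invrM ?U // !mulrA.
have C2 : b3 * b4 * b1 * b2 = (a1 * a2 * a3 * a4)^-1.
  by rewrite -mulrA P34 P12 -invrM ?U // !mulrA.
have C3 : b4 * b1 * b2 * b3 = (a2 * a3 * a4 * a1)^-1.
  by rewrite -mulrA P41 P23 -invrM ?U // !mulrA.
have C4 : b1 * b2 * b3 * b4 = (a3 * a4 * a1 * a2)^-1.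
  by rewrite -mulrA P12 P34 -invrM ?U // !mulrA.
have uinv : forall A : R, A \is a GRing.unit -> 1 + A \is a GRing.unit ->
    1 + A^-1 \is a GRing.unit.
  move=> A uA u1A.
  have -> : 1 + A^-1 = A^-1 * (1 + A) by rewrite mulrDr mulr1 mulVr // addrC.
  by rewrite U // unitrV.
rewrite C1 C2 C3 C4 !invrK E1 E2 E3 E4 !mulKr ?mulVKr //; exact: uinv.
Qed.
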